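(* Let $P$ be a finite poset, $\phi\in\mathrm{Hom}(P,\mathbb{N})$, $m=\overline{\Lambda}\phi$ and $b\in P$. Then the longest $b$-chain in $m$ has length $\phi(b)$.
   Context: $\mathbb{N}=\{0,1,\dots\}$; $\mathrm{Hom}(P,\mathbb{N})$ is the set of isotone maps $P\to\mathbb{N}$. The ascent is $\Lambda\phi=\{(p,i)\in P\times\mathbb{N}:\phi(q)\le i<\phi(p)\ \forall q<p\}$ and $\overline{\Lambda}\phi=\prod_{(p,i)\in\Lambda\phi}x_p\in k[x_P]$. For $b\in P$, a $b$-chain is a multichain $p_1\le p_2\le\dots\le p_r$ in $P$ with $p_r\le b$; its length is $r$; it is in a monomial $m$ if $\prod_{i=1}^r x_{p_i}$ divides $m$. *)

(* Defs.v *)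
From mathcomp Require Import all_boot all_order.
Set Implicit Arguments. Unset Strict Implicit. Unset Printing Implicit Defensive.
Import Order.Theory.
Local Open Scope order_scope.

(* Monomials of k[x_P] are represented by their exponent vectors P -> nat;
   the monomial m1 divides m2 iff its exponents are pointwise <=. *)
Definition monomial (T : Type) := T -> nat.
Definition mdivides (T : Type) (m1 m2 : monomial T) : Prop :=
  forall p, (m1 p <= m2 p)%N.

Definition isotone d (P : porderType d) (phi : P -> nat) : Prop :=
  forall x y : P, x <= y -> (phi x <= phi y)%N.

Definition ascent d (P : finPOrderType d) (phi : P -> nat) (pi : P * nat) : bool :=
  [forall q : P, (q < pi.1) ==> (phi q <= pi.2)%N] && (pi.2 < phi pi.1)%N.

(* \overline{Lambda} phi = prod_{(p,i) in Lambda phi} x_p : the exponent of x_p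
   is the number of i with (p,i) in Lambda phi (all such i lie in [0, phi p)). *)
Definition ascent_mono d (P : finPOrderType d) (phi : P -> nat) : monomial P :=
  fun p => count (fun i => ascent phi (p, i)) (iota 0 (phi p)).

(* A b-chain is a multichain p_1 <= ... <= p_r with p_r <= b (r may be 0). *)
Definition bchain d (P : porderType d) (b : P) (s : seq P) : Prop :=
  sorted (fun x y : P => x <= y) s /\ last b s <= b.

Definition chain_mono (P : eqType) (s : seq P) : monomial P :=
  fun p => count_mem p s.

Definition chain_in (P : eqType) (s : seq P) (m : monomial P) : Prop :=
  mdivides (chain_mono s) m.

(* Main.v *)
Require Import Defs.
From mathcomp Require Import all_boot all_order.
From mathcomp Require Import zify.
Local Open Scope order_scope.
Import Order.Theory.

Section Aux.
Variables (d : Order.disp_t) (P : finPOrderType d) (phi : P -> nat).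
Hypothesis Hphi : isotone phi.

Lemma sorted_last (s : seq P) (x0 y : P) :
  sorted <=%O s -> y \in s -> y <= last x0 s.
Proof.
elim: s x0 => [//|a t IH] x0 /=.
rewrite in_cons => hp /orP [/eqP ->|hy].
- case: t {IH} hp => [|b t] hp; first by [].
  have := order_path_min (@le_trans _ P) (hp : path <=%O a (b :: t)).
  move=> /allP; apply; exact: (mem_last b t).
- by apply: IH => //; exact: path_sorted hp.
Qed.

Lemma last_in (u : seq P) (x0 : P) : u != [::] -> last x0 u \in u.
Proof.
case: u => // a t _ /=; have := mem_last a t; rewrite in_cons => /orP [/eqP -> | ->]; by rewrite ?eqxx ?orbT.
Qed.

Lemma m_le (c : P) : (ascent_mono phi c <= phi c)%N.
Proof. by rewrite /ascent_mono -{2}(size_iota 0 (phi c)) count_size. Qed.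

Lemma m_lower (c : P) (j : nat) : (forall q : P, q < c -> (phi q <= j)%N) ->
  (j <= phi c)%N -> (phi c - j <= ascent_mono phi c)%N.
Proof.
move=> H hj; rewrite /ascent_mono.
have -> : iota 0 (phi c) = iota 0 j ++ iota j (phi c - j) by rewrite -iotaD subnKC.
rewrite count_cat (@eq_in_count _ _ predT (iota j (phi c - j))).
  by rewrite count_predT size_iota leq_addl.
move=> i; rewrite mem_iota subnKC // => /andP [h1 h2] /=.
rewrite /ascent /= h2 andbT; apply/forallP => q; apply/implyP => hq.
exact: leq_trans (H q hq) h1.
Qed.

Lemma m_upper {c q : P} : q < c -> (ascent_mono phi c + phi q <= phi c)%N.
Proof.
move=> hq; have hqc := Hphi _ _ (ltW hq); rewrite /ascent_mono.
have -> : iota 0 (phi c) = iota 0 (phi q) ++ iota (phi q) (phi c - phi q)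
  by rewrite -iotaD subnKC.
rewrite count_cat (@eq_in_count _ _ pred0 (iota 0 (phi q))).
  rewrite count_pred0 add0n.
  have := count_size (fun i => ascent phi (c, i)) (iota (phi q) (phi c - phi q)).
  rewrite size_iota; lia.
move=> i; rewrite mem_iota add0n /= => h.
rewrite /ascent /=; apply/negbTE; rewrite negb_and; apply/orP; left.
rewrite negb_forall; apply/existsP; exists q; rewrite hq /= -ltnNge //.
Qed.

Lemma upper (n : nat) (s : seq P) (x0 : P) : (size s <= n)%N ->
  sorted <=%O s -> s != [::] -> chain_in s (ascent_mono phi) ->
  (size s <= phi (last x0 s))%N.
Proof.
elim: n s => [|n IH] s; first by case: s.
move=> hsz hs hne hin.
have cin : last x0 s \in s.
  exact: last_in.
set c := last x0 s.
set t := filter (predC1 c) s.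
have hsplit : size s = (size t + count_mem c s)%N.
  rewrite size_filter addnC -(count_predC (pred1 c) s); congr addn.
have hk : (count_mem c s <= ascent_mono phi c)%N by exact: hin.
have hk0 : (0 < count_mem c s)%N by rewrite -has_count; apply/hasP; exists c => //=.
case: (altP (t =P [::])) => [ht | htne].
  by rewrite hsplit ht /= add0n (leq_trans hk (m_le c)).
have ts : sorted <=%O t by apply: sorted_filter => //; exact: le_trans.
have tin : chain_in t (ascent_mono phi).
  move=> p; apply: leq_trans (hin p); rewrite /chain_mono /t count_filter.
  by apply: sub_count => y /andP [].
have htsz : (size t <= n)%N by move: hsz hk0; rewrite hsplit; move: (size t) (count_mem c s) => a b; lia.
have := IH t htsz ts htne tin.
have c'in : last x0 t \in t.
  exact: last_in.
set c' := last x0 t.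
have hlt : c' < c.
  move: c'in; rewrite mem_filter => /andP [/= hne' hs'].
  by rewrite lt_neqAle hne' sorted_last.
have := m_upper hlt; move: hsplit hk; move: (size t) (count_mem c s) (size s) => a1 a2 a3; lia.
Qed.

Lemma pairwise_nseq (k : nat) (c : P) : pairwise <=%O (nseq k c).
Proof.
elim: k => //= k ->; rewrite andbT; apply/allP => y.
by rewrite mem_nseq => /andP [_ /eqP ->].
Qed.

Lemma exist_chain (n : nat) (c : P) : (#|[set y : P | (y < c)%O]| < n)%N ->
  exists s : seq P, [/\ sorted <=%O s, all (fun y => y <= c) s,
    chain_in s (ascent_mono phi) & size s = phi c].
Proof.
elim: n c => [//|n IH] c hn.
case: (pickP (fun q => q < c)) => [q0 hq0 | none].
- case: (@arg_maxnP _ q0 (fun q => q < c) phi hq0) => q hq hmax.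
  have hcard : (#|[set y : P | (y < q)%O]| < n)%N.
    have : [set y : P | (y < q)%O] \proper [set y : P | (y < c)%O].
      apply/properP; split.
        by apply/subsetP => y; rewrite !inE => hy; exact: lt_trans hy hq.
      by exists q; rewrite !inE ?ltxx.
    move/proper_card; lia.
  have [s' [s's s'all s'in s'sz]] := IH q hcard.
  have hqc := Hphi _ _ (ltW hq).
  exists (s' ++ nseq (phi c - phi q) c); split.
  + rewrite le_sorted_pairwise pairwise_cat pairwise_nseq -le_sorted_pairwise s's !andbT.
    apply/allrelP => x y hx; rewrite mem_nseq => /andP [_ /eqP ->].
    exact: le_trans ((allP s'all) x hx) (ltW hq).
  + rewrite all_cat; apply/andP; split.
      by apply/allP => x hx; exact: le_trans ((allP s'all) x hx) (ltW hq).
    by apply/allP => x; rewrite mem_nseq => /andP [_ /eqP ->].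
  + move=> p; rewrite /chain_mono count_cat count_nseq /=.
    case: (altP (c =P p)) => [<- | hne] /=.
    * rewrite (@eq_in_count _ _ pred0 s').
        rewrite count_pred0 add0n mul1n; apply: m_lower => //.
      move=> y hy /=; apply/negbTE; apply/eqP => hyc.
      have := (allP s'all) y hy; rewrite hyc => hcq.
      by have := lt_le_trans hq hcq; rewrite ltxx.
    * rewrite mul0n addn0; exact: s'in.
  + by rewrite size_cat size_nseq s'sz subnKC.
- exists (nseq (phi c) c); split.
  + by rewrite le_sorted_pairwise pairwise_nseq.
  + by apply/allP => x; rewrite mem_nseq => /andP [_ /eqP ->].
  + move=> p; rewrite /chain_mono count_nseq /=.
    case: (altP (c =P p)) => [<- | hne] /=; last by rewrite mul0n.
    rewrite mul1n -{1}(subn0 (phi c)); apply: m_lower => // q hq.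
    by have := none q; rewrite /= hq.
  + by rewrite size_nseq.
Qed.

End Aux.

Theorem lemma3p9 (d : Order.disp_t) (P : finPOrderType d) (phi : P -> nat)
    (Hphi : isotone phi) (b : P) :
  let m := ascent_mono phi in
  (exists s : seq P, [/\ bchain b s, chain_in s m & size s = phi b]) /\
  (forall s : seq P, bchain b s -> chain_in s m -> (size s <= phi b)%N).
Proof.
move=> m; split.
- have [s [hs hall hin hsz]] := @exist_chain d P phi Hphi _ b (ltnSn #|[set y : P | (y < b)%O]|).
  exists s; split => //; split => //.
  have : last b s \in b :: s by exact: mem_last.
  by rewrite in_cons => /orP [/eqP -> // | hx]; exact: (allP hall).
- move=> s [hs hl] hin.
  case: (altP (s =P [::])) => [-> //| hne].
  apply: leq_trans (@upper d P phi Hphi (size s) s b (leqnn _) hs hne hin) _.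
  exact: Hphi.
Qed.
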